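(* If $\mathcal C$ is a Baker class, then $\mathcal C^{(d)}$ is a Baker class for every integer $d\ge1$.
   Context: A layering of a graph $G$ is a function $\lambda:V(G)\to\mathbb{Z}$ with $|\lambda(u)-\lambda(v)|\le1$ for every edge $uv$; its width is $\sup_{i\in\mathbb Z}|\lambda^{-1}(i)|$. For $P\subseteq V(G)$, a layering $\lambda$ of $G[P]$ is $G$-geodesic if $d_G(x,y)\ge|\lambda(x)-\lambda(y)|$ for all $x,y\in P$ ($d_G$ the distance in $G$, $\infty$ between different components). An ordered graph is a finite graph with a linear ordering of its vertices; subgraphs inherit the restricted ordering. For an infinite sequence $\mathbf r=r_1,r_2,\dots$ of positive integers and an integer $s\ge0$, let $\mathrm{tail}_s(\mathbf r)=r_{s+1},r_{s+2},\dots$, $\mathrm{tail}(\mathbf r)=\mathrm{tail}_1(\mathbf r)$ and $\mathrm{head}(\mathbf r)=r_1$. The Baker game between Destroyer and Preserver has states $(G,\mathbf r)$ with $G$ an ordered graph and $\mathbf r$ an infinite sequence of positive integers. If $V(G)=\emptyset$ the game stops. Otherwise, in one round Destroyer chooses either Delete (the smallest vertex $v$ of $G$ is removed and the game proceeds to $(G-v,\mathrm{tail}(\mathbf r))$) or Restrict (Destroyer chooses a layering $\lambda$ of $G$, Preserver chooses an interval $I$ of at most $\mathrm{head}(\mathbf r)$ consecutive integers, and the game proceeds to $(G[\lambda^{-1}(I)],\mathrm{tail}(\mathbf r))$). Destroyer wins on $(G,\mathbf r)$ in $t$ rounds if he has a strategy such that, regardless of Preserver's choices, the game stops after at most $t$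 rounds. A class $\mathcal C$ of ordered graphs is a Baker class if for every infinite sequence $\mathbf r$ of positive integers there is an integer $t$ such that for every $G\in\mathcal C$, Destroyer wins the Baker game on $(G,\mathbf r)$ in $t$ rounds. A partition $\mathcal P$ of an ordered graph $G$ (ordering $\prec$) is a sequence $P_1,\dots,P_m$ of pairwise disjoint sets with union $V(G)$ such that $u\prec v$ whenever $u\in P_i$, $v\in P_j$, $i<j$. It is width-$d$ geodesic if for each $i\in\{1,\dots,m\}$, $G[P_i]$ has a $G[P_i\cup P_{i+1}\cup\dots\cup P_m]$-geodesic layering of width at most $d$. $G/\mathcal P$ is the ordered graph obtained from $G$ by identifying the vertices of each part into a single vertex and suppressing loops and parallel edges, with vertices ordered as the sequence of parts. $\mathcal C^{(d)}$ is the class of ordered graphs $G$ having a width-$d$ geodesic partition $\mathcal P$ with $G/\mathcal P\in\mathcal C$. *)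

(* Defs.v *)
From HB Require Import structures.
From mathcomp Require Import all_boot all_order all_algebra.
Set Implicit Arguments. Unset Strict Implicit. Unset Printing Implicit Defensive.
Import Order.TTheory GRing.Theory Num.Theory.

(* An ordered graph: a finite vertex set of natural numbers (given by a
   sequence; only membership matters), ordered by the natural order of nat,
   and an adjacency relation. *)
Record ograph := OGraph { overt : seq nat; oadj : rel nat }.

Definition edge (G : ograph) (x y : nat) : bool :=
  [&& x \in overt G, y \in overt G, x != y & oadj G x y || oadj G y x].

Definition induced (G : ograph) (S : pred nat) : ograph :=
  OGraph [seq x <- overt G | S x] (oadj G).

(* smallest vertex (meaningful when the vertex set is nonempty) *)
Definition minv (G : ograph) : nat := foldr minn (head 0 (overt G)) (overt G).

Definition delete_min (G : ograph) : ograph :=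
  induced G (fun x => x != minv G).

Definition layering (G : ograph) (lam : nat -> int) : Prop :=
  forall u v, edge G u v -> (absz (lam u - lam v) <= 1)%N.

Definition width_le (G : ograph) (lam : nat -> int) (d : nat) : Prop :=
  forall i : int, (count (fun x => lam x == i) (undup (overt G)) <= d)%N.

Fixpoint walk (G : ograph) (k : nat) (x y : nat) : bool :=
  if k is k'.+1 then has (fun z => edge G x z && walk G k' z y) (overt G)
  else (x == y) && (x \in overt G).

(* lam is a layering of H[P] which is H-geodesic:
   d_H(x,y) >= |lam x - lam y| for x, y in P, i.e. every walk in H from x to
   y has length at least |lam x - lam y| (d_H = infinity if there is none). *)
Definition geodesic_layering (H : ograph) (P : pred nat) (lam : nat -> int) : Prop :=
  layering (induced H P) lam /\
  forall x y, x \in overt H -> y \in overt H -> P x -> P y ->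
    forall k, walk H k x y -> (absz (lam x - lam y) <= k)%N.

Definition is_partition (G : ograph) (parts : seq (seq nat)) : Prop :=
  [/\ (forall i, (i < size parts)%N -> nth [::] parts i != [::]),
      (forall i x, x \in nth [::] parts i -> x \in overt G),
      (forall x, x \in overt G -> exists2 i, (i < size parts)%N & x \in nth [::] parts i),
      (forall i j x, i != j -> x \in nth [::] parts i -> x \notin nth [::] parts j) &
      (forall i j u v, (i < j)%N -> u \in nth [::] parts i -> v \in nth [::] parts j ->
         (u < v)%N)].

Definition geodesic_partition (d : nat) (G : ograph) (parts : seq (seq nat)) : Prop :=
  forall i, (i < size parts)%N ->
    exists lam : nat -> int,
      let H := induced G (fun x => x \in flatten (drop i parts)) in
      geodesic_layering H (fun x => x \in nth [::] parts i) lam /\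
      width_le (induced G (fun x => x \in nth [::] parts i)) lam d.

Definition quotient (G : ograph) (parts : seq (seq nat)) : ograph :=
  OGraph (iota 0 (size parts))
    (fun i j => (i != j) &&
       has (fun x => has (fun y => edge G x y) (nth [::] parts j)) (nth [::] parts i)).

Definition rtail (r : nat -> nat) : nat -> nat := fun i => r i.+1.

Fixpoint destroyer_wins (t : nat) (G : ograph) (r : nat -> nat) : Prop :=
  if t is t'.+1 then
    overt G = [::] \/
    destroyer_wins t' (delete_min G) (rtail r) \/
    (exists lam : nat -> int, layering G lam /\
       forall (a : int) (k : nat), (k <= r 0)%N ->
         destroyer_wins t'
           (induced G (fun x => (a <= lam x)%R && (lam x < a + k%:Z)%R)) (rtail r))
  else overt G = [::].

Definition baker_class (C : ograph -> Prop) : Prop :=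
  forall r : nat -> nat, (forall i, (0 < r i)%N) ->
    exists t : nat, forall G, C G -> destroyer_wins t G r.

Definition class_d (C : ograph -> Prop) (d : nat) (G : ograph) : Prop :=
  exists parts : seq (seq nat),
    [/\ is_partition G parts, geodesic_partition d G parts & C (quotient G parts)].

(* Main.v *)
Require Import Defs.
From mathcomp Require Import all_boot all_order all_algebra.
From mathcomp Require Import zify.
From Stdlib Require Import FunctionalExtensionality ClassicalEpsilon.
Set Implicit Arguments. Unset Strict Implicit. Unset Printing Implicit Defensive.
Import Order.TTheory GRing.Theory Num.Theory.

Lemma edge_sym G x y : edge G x y = edge G y x.
Proof. by rewrite /edge eq_sym orbC; case: (x \in _); case: (y \in _). Qed.

Lemma edge_in G x y : edge G x y -> (x \in overt G) && (y \in overt G).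
Proof. by case/and4P=> -> ->. Qed.

Lemma edge_induced G S x y : edge (induced G S) x y = [&& S x, S y & edge G x y].
Proof.
rewrite /edge /= !mem_filter.
by case: (S x); case: (S y); case: (x \in _); case: (y \in _).
Qed.

Definition sub (G' G : ograph) :=
  {subset overt G' <= overt G} /\ (forall x y, edge G' x y -> edge G x y).

Lemma sub_trans G1 G2 G3 : sub G1 G2 -> sub G2 G3 -> sub G1 G3.
Proof. by move=> [a b] [c e]; split=> [x /a/c|x y /b/e]. Qed.

Lemma sub_induced_l G S : sub (induced G S) G.
Proof. by split=> [x|x y]; rewrite ?mem_filter ?edge_induced; [case/andP|case/and3P]. Qed.

Lemma sub_induced G' G S : sub G' G -> sub (induced G' S) (induced G S).
Proof.
move=> [a b]; split=> [x|x y]; rewrite ?mem_filter ?edge_induced.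
  by case/andP=> -> /a.
by case/and3P=> -> -> /b.
Qed.

Lemma nil_of G : (forall x, x \in overt G -> False) -> overt G = [::].
Proof. by case: (overt G) => // a s /(_ a); rewrite inE eqxx => /(_ isT). Qed.

Lemma sub_nil G' G : sub G' G -> overt G = [::] -> overt G' = [::].
Proof. by move=> [a _] E; apply: nil_of => x /a; rewrite E. Qed.

Lemma foldr_minn_le b s : (foldr minn b s <= b) && all (fun x => foldr minn b s <= x) s.
Proof.
elim: s => [|a s /andP[IH1 IH2]] /=; first by rewrite leqnn.
rewrite geq_minl geq_min IH1 orbT /=.
by apply/allP=> x xs; rewrite geq_min (allP IH2 x xs) orbT.
Qed.

Lemma foldr_minn_in b s : foldr minn b s \in b :: s.
Proof.
elim: s => [|a s IH] /=; first by rewrite inE.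
rewrite /minn; case: ifP => _; first by rewrite !inE eqxx orbT.
move: IH; rewrite !inE; case/orP=> ->; rewrite ?orbT //.
Qed.

Lemma minv_in G : overt G != [::] -> minv G \in overt G.
Proof.
rewrite /minv; case: (overt G) => // a s _ /=.
move: (foldr_minn_in a (a :: s)) => /=; rewrite inE; case/orP=> [/eqP->|//].
by rewrite inE eqxx.
Qed.

Lemma minv_le G x : x \in overt G -> minv G <= x.
Proof. by move=> xG; case/andP: (foldr_minn_le (head 0 (overt G)) (overt G)) => _ /allP; apply. Qed.

Lemma minv_sub G' G : sub G' G -> minv G \in overt G' -> minv G' = minv G.
Proof.
move=> [a _] vG'; apply/eqP; rewrite eqn_leq minv_le //= minv_le //.
by apply/a/minv_in; apply/eqP=> E; rewrite E in vG'.
Qed.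

Lemma wins_nil t G r : overt G = [::] -> destroyer_wins t G r.
Proof. by case: t => [|t] /= ->; [|left]. Qed.

Lemma layering_sub G' G lam : sub G' G -> layering G lam -> layering G' lam.
Proof. by move=> [_ b] L u v /b; apply: L. Qed.

Lemma wins_mono t G G' r : destroyer_wins t G r -> sub G' G -> destroyer_wins t G' r.
Proof.
elim: t G G' r => [|t IH] G G' r /=; first by move=> E S; apply: sub_nil S E.
case=> [E S|[D S|[lam [L W]] S]].
- by left; apply: sub_nil S E.
- case vG': (minv G \in overt G').
    right; left; rewrite /delete_min (minv_sub S vG'); apply: IH D _.
    exact: sub_induced.
  right; right; exists (fun _ => 0%R); split; first by move=> u v _; rewrite subrr.
  move=> a k _; apply: IH D _; apply: sub_trans (sub_induced_l _ _) _.
  case: S => [Sa Sb]; split=> [x xG'|x y e].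
    by rewrite mem_filter Sa // andbT; apply/eqP=> E; rewrite -E xG' in vG'.
  rewrite edge_induced Sb // andbT; case/andP: (edge_in e) => xG' yG'.
  by apply/andP; split; apply/eqP=> E; [rewrite -E xG' in vG'|rewrite -E yG' in vG'].
- right; right; exists lam; split; first exact: layering_sub S L.
  by move=> a k kr; apply: IH (W a k kr) (sub_induced _ S).
Qed.

Lemma wins_skip t G r : destroyer_wins t G (rtail r) -> destroyer_wins t.+1 G r.
Proof.
move=> W /=; right; right; exists (fun _ => 0%R); split; first by move=> u v _; rewrite subrr.
by move=> a k _; apply: wins_mono W (sub_induced_l _ _).
Qed.

Lemma wins_skips n t G r : destroyer_wins t G (fun i => r (n + i)) -> destroyer_wins (n + t) G r.
Proof.
elim: n r => [|n IH] r W; first by rewrite add0n; move: W; congr destroyer_wins; apply: functional_extensionality.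
rewrite addSn; apply: wins_skip; apply: IH.
by move: W; congr destroyer_wins; apply: functional_extensionality=> i; rewrite /rtail addSn.
Qed.

Lemma walk_sub G H k x y : sub G H -> walk G k x y -> walk H k x y.
Proof.
move=> [a b]; elim: k x => [|k IH] x /=; first by case/andP=> -> /a.
case/hasP=> z zG /andP[e w]; apply/hasP; exists z; first exact: a.
by rewrite b // IH.
Qed.

Lemma walk_snoc G k x u v : walk G k x u -> edge G u v -> walk G k.+1 x v.
Proof.
elim: k x => [|k IH] x /=.
  case/andP=> /eqP-> uG e; apply/hasP; exists v; first by case/andP: (edge_in e).
  by rewrite e eqxx; case/andP: (edge_in e) => _ ->.
case/hasP=> z zG /andP[e w] e'; apply/hasP; exists z => //.
by rewrite e; exact: (IH z w e').
Qed.

Definition part (parts : seq (seq nat)) (v : nat) := find (fun P => v \in P) parts.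

Lemma part_in G0 parts v : is_partition G0 parts -> v \in overt G0 ->
  (part parts v < size parts) /\ v \in nth [::] parts (part parts v).
Proof.
case=> _ _ c _ _ /c [i lt vi].
have hs : has (fun P => v \in P) parts by apply/(has_nthP [::]); exists i.
by split; [rewrite -has_find | apply: (nth_find [::] hs)].
Qed.

Lemma part_eq G0 parts v i : is_partition G0 parts -> (i < size parts) ->
  v \in nth [::] parts i -> part parts v = i.
Proof.
move=> hP lt vi; have [_ b _ e _] := hP; have vG := b _ _ vi.
have [_ vp] := part_in hP vG; apply/eqP; apply: contraT => ne.
by move: (e _ _ _ ne vp); rewrite vi.
Qed.

Lemma part_lt G0 parts u v : is_partition G0 parts -> u \in overt G0 -> v \in overt G0 ->
  part parts u < part parts v -> u < v.
Proof.
move=> hP uG vG lt; have [_ _ _ _ e] := hP.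
by apply: (e _ _ _ _ lt); [case: (part_in hP uG) | case: (part_in hP vG)].
Qed.

Lemma mem_nth_flatten (ss : seq (seq nat)) j x : x \in nth [::] ss j -> x \in flatten ss.
Proof.
elim: ss j => [|s ss IH] [|j] //=; rewrite ?nth_nil // mem_cat.
  by move=> ->.
by move/IH=> ->; rewrite orbT.
Qed.

Lemma mem_flatten_drop (parts : seq (seq nat)) m i v : m <= i -> v \in nth [::] parts i ->
  v \in flatten (drop m parts).
Proof.
move=> le vi; apply: (@mem_nth_flatten _ (i - m)); rewrite nth_drop subnKC //.
Qed.

Lemma quotient_edge G0 parts u v : is_partition G0 parts -> edge G0 u v ->
  part parts u != part parts v -> edge (quotient G0 parts) (part parts u) (part parts v).
Proof.
move=> hP e ne; case/andP: (edge_in e) => uG vG.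
have [lu iu] := part_in hP uG; have [lv iv] := part_in hP vG.
rewrite /edge /= !mem_iota /= lu lv ne /=.
apply/orP; left; apply/hasP; exists u => //; apply/hasP; exists v; by [].
Qed.

Definition Inv G0 parts (H G : ograph) :=
  [/\ oadj H = oadj (quotient G0 parts), {subset overt H <= iota 0 (size parts)},
      sub G G0 & forall v, v \in overt G -> part parts v \in overt H].

Lemma Inv_sub G0 parts H G G' : Inv G0 parts H G -> sub G' G -> Inv G0 parts H G'.
Proof.
case=> a b c e S; split=> //; first exact: sub_trans S c.
by move=> v /(proj1 S); apply: e.
Qed.

Lemma Inv_edge G0 parts H G u v : is_partition G0 parts -> Inv G0 parts H G -> edge G u v ->
  part parts u != part parts v -> edge H (part parts u) (part parts v).
Proof.
move=> hP [a b [c1 c2] e] ed ne; case/andP: (edge_in ed) => uG vG.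
move: (quotient_edge hP (c2 _ _ ed) ne); rewrite /edge a e // e //.
by case/and4P=> _ _ -> ->.
Qed.


Lemma foldr_abs_le (lam : nat -> int) s x : x \in s ->
  (absz (lam x) <= foldr (fun y acc => absz (lam y) + acc) 0 s)%N.
Proof.
elim: s => [|a s IH] //=; rewrite inE; case/orP=> [/eqP->|/IH]; lia.
Qed.

Lemma extend_layering G (Hm : ograph) (Pm : seq nat) (lam : nat -> int) :
  sub G Hm ->
  (forall x y, x \in overt Hm -> y \in overt Hm -> x \in Pm -> y \in Pm ->
     forall k, walk Hm k x y -> (absz (lam x - lam y) <= k)%N) ->
  exists L, layering G L /\ forall y, y \in overt G -> y \in Pm -> L y = lam y.
Proof.
move=> S geo.
pose N0 := foldr (fun y acc => absz (lam y) + acc)%N 0%N (overt G).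
have hN : forall x, x \in overt G -> (0 <= lam x + N0%:Z)%R.
  by move=> x /(foldr_abs_le lam) ; rewrite -/N0; lia.
pose Qb v n := has (fun x => (x \in Pm) && has (fun k => walk G k x v &&
     (absz ((lam x + N0%:Z)%R) + k == n)%N) (iota 0 n.+1)) (overt G).
have QbP : forall v n, Qb v n <-> exists x k, [/\ x \in overt G, x \in Pm, walk G k x v &
                        (absz ((lam x + N0%:Z)%R) + k = n)%N].
  move=> v n; rewrite /Qb; split.
    case/hasP=> x xG /andP[xP /hasP[k _ /andP[w /eqP e]]].
    by exists x, k; split.
  case=> x [k [xG xP w e]]; apply/hasP; exists x => //; rewrite xP.
  by apply/hasP; exists k; rewrite ?w ?e ?eqxx // mem_iota; lia.
have step : forall u v n, Qb u n -> edge G u v -> Qb v n.+1.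
  move=> u v n /QbP[x [k [xG xP w e]]] ed; apply/QbP; exists x, k.+1; split=> //.
    exact: walk_snoc w ed.
  lia.
pose L v : int := match excluded_middle_informative (exists n, Qb v n) with
  | left e => ((ex_minn e)%:Z - N0%:Z)%R | right _ => 0%R end.
exists L; split.
  move=> u v ed; rewrite /L.
  case: excluded_middle_informative => [eu|neu];
  case: excluded_middle_informative => [ev|nev].
  - case: ex_minnP => nu qu mu; case: ex_minnP => nv qv mv.
    have h1 := mv _ (step _ _ _ qu ed).
    rewrite edge_sym in ed; have h2 := mu _ (step _ _ _ qv ed).
    lia.
  - by case: eu => n qn; case: nev; exists n.+1; exact: step qn ed.
  - rewrite edge_sym in ed.
    by case: ev => n qn; case: neu; exists n.+1; exact: step qn ed.
  - by rewrite subrr.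
move=> y yG yP; rewrite /L.
have qy : Qb y (absz ((lam y + N0%:Z)%R)).
  by apply/QbP; exists y, 0%N; split; rewrite ?addn0 //= eqxx yG.
case: excluded_middle_informative => [ey|ney]; last by case: ney; exists (absz ((lam y + N0%:Z)%R)).
case: ex_minnP => ny /QbP[x [k [xG xP w e]]] my.
have h1 := my _ qy.
have h2 := geo x y (proj1 S _ xG) (proj1 S _ yG) xP yP k (walk_sub S w).
have h3 := hN x xG; have h4 := hN y yG.
lia.
Qed.

Lemma count_uniq_le (s1 s2 : seq nat) (p1 p2 : pred nat) : uniq s1 ->
  (forall x, x \in s1 -> p1 x -> (x \in s2) && p2 x) -> count p1 s1 <= count p2 (undup s2).
Proof.
move=> u h; rewrite -!size_filter; apply: uniq_leq_size; first exact: filter_uniq.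
move=> x; rewrite !mem_filter mem_undup => /andP[px xs].
by case/andP: (h x xs px) => -> ->.
Qed.

Lemma count_window (U : seq nat) (lam : nat -> int) d k (a : int) :
  (forall i : int, count (fun x => lam x == i) U <= d) ->
  count (fun x => (a <= lam x)%R && (lam x < a + k%:Z)%R) U <= k * d.
Proof.
move=> W; elim: k a => [|k IH] a.
  by rewrite (@eq_count _ _ pred0) ?count_pred0 // => x /=; lia.
apply: leq_trans (_ : count (predU (fun x => lam x == a)
   (fun x => (a + 1 <= lam x)%R && (lam x < (a + 1) + k%:Z)%R)) U <= _).
  by apply: sub_count => x /= h; lia.
apply: leq_trans (_ : count (fun x => lam x == a) U + count
   (fun x => (a + 1 <= lam x)%R && (lam x < (a + 1) + k%:Z)%R) U <= _).
  by rewrite -count_predUI leq_addr.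
by rewrite mulSn leq_add.
Qed.

Lemma count_delete (s : seq nat) (p : pred nat) v : v \in s -> p v ->
  count p (undup [seq x <- s | x != v]) < count p (undup s).
Proof.
move=> vs pv; rewrite -filter_undup count_filter.
set t := undup s.
have e : count (predI p (predC1 v)) t + count (predI p (pred1 v)) t = count p t.
  rewrite -[RHS]addn0 -(count_pred0 t) -count_predUI; congr (_ + _); apply: eq_count=> x /=;
  by case: (p x); case: (x == v).
rewrite -e -[X in X < _]addn0 ltn_add2l -has_count; apply/hasP; exists v => //=.
  by rewrite mem_undup.
by rewrite pv eqxx.
Qed.

Fixpoint sq d (r : nat -> nat) j :=
  if j is j'.+1 then sq d r j' + (1 + d * r (sq d r j')) else 0.
Fixpoint Tl d (r : nat -> nat) j t :=
  if t is t'.+1 then (1 + d * r (sq d r j)) + Tl d r j.+1 t' else 0.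

Lemma seq1 d r j : rtail (fun i => r (sq d r (j + i))) = (fun i => r (sq d r (j.+1 + i))).
Proof. by apply: functional_extensionality => i; rewrite /rtail addnS addSn. Qed.

Lemma seq2 d r j : (fun i => rtail (fun i => r (sq d r j + i)) (d * r (sq d r j) + i))
   = (fun i => r (sq d r j.+1 + i)).
Proof.
apply: functional_extensionality => i; rewrite /rtail /=; congr r.
by rewrite -addnA add1n addSn addnS.
Qed.

Lemma TlS d r j t : Tl d r j t.+1 = (d * r (sq d r j) + Tl d r j.+1 t).+1.
Proof. by rewrite /= add1n addSn. Qed.

Lemma Inv_del G0 parts H G : Inv G0 parts H G ->
  count (fun v => part parts v == minv H) (undup (overt G)) = 0 -> Inv G0 parts (delete_min H) G.
Proof.
case=> a b c e z; split=> //.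
  by move=> x; rewrite mem_filter => /andP[_ /b].
move=> v vG; rewrite mem_filter e // andbT.
apply/negP=> /eqP E; move/eqP: z; rewrite eqn0Ngt -has_count; case/negP.
by apply/hasP; exists v; rewrite ?mem_undup ?E.
Qed.

Lemma del_phase G0 parts (H : ograph) t (q : nat -> nat) : is_partition G0 parts ->
  forall n G', Inv G0 parts H G' ->
  count (fun v => part parts v == minv H) (undup (overt G')) <= n ->
  (forall G2, Inv G0 parts (delete_min H) G2 -> destroyer_wins t G2 (fun i => q (n + i))) ->
  destroyer_wins (n + t) G' q.
Proof.
move=> hP n; elim: n q => [|n IH] q G' I c hyp.
  by apply: (@wins_skips 0); apply: hyp; apply: (Inv_del I); lia.
case: (posnP (count (fun v => part parts v == minv H) (undup (overt G')))) => [z|pos].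
  by apply: (@wins_skips n.+1); apply: hyp; apply: (Inv_del I).
move: (pos); rewrite -has_count => /hasP [y yG /eqP py]; rewrite mem_undup in yG.
have ne : overt G' != [::] by apply/eqP=> E; rewrite E in yG.
set v := minv G'; have vG : v \in overt G' := minv_in ne.
case: (I) => _ _ [Ssub _] Ipart.
have pv : part parts v = minv H.
  apply/eqP; rewrite eqn_leq minv_le ?Ipart // andbT leqNgt; apply/negP => lt.
  have := part_lt hP (Ssub _ yG) (Ssub _ vG); rewrite py => /(_ lt).
  by rewrite ltnNge minv_le.
rewrite addSn /=; right; left.
apply: IH.
- exact: Inv_sub I (sub_induced_l _ _).
- have h := count_delete (p := fun v => part parts v == minv H) vG; rewrite /= pv eqxx in h.
  by rewrite -ltnS (leq_trans (h isT) c).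
- move=> G2 I2; have := hyp G2 I2; congr destroyer_wins.
Qed.

Lemma sim G0 parts d r : is_partition G0 parts -> geodesic_partition d G0 parts ->
  forall tH H j G, Inv G0 parts H G ->
  destroyer_wins tH H (fun i => r (sq d r (j + i))) ->
  destroyer_wins (Tl d r j tH) G (fun i => r (sq d r j + i)).
Proof.
move=> hP hG tH; elim: tH => [|tH IH] H j G I.
  move=> /= E; case: I => _ _ _ Ie; apply: nil_of => v /Ie; by rewrite E.
have [HE|HNE] := eqVneq (overt H) [::].
  by move=> _; apply: wins_nil; case: I => _ _ _ Ie; apply: nil_of => v /Ie; rewrite HE.
move=> [E|[D|[mu [Lmu Wmu]]]]; first by rewrite E eqxx in HNE.
-
  set m := minv H; have mH : m \in overt H := minv_in HNE.
  case: (I) => Ia Ib [Sa Sb] Ie.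
  have msz : m < size parts by move: (Ib _ mH); rewrite mem_iota.
  have [lam [[_ geoL] wid]] := hG m msz.
  set Hm := induced G0 (fun x => x \in flatten (drop m parts)).
  have inHm : forall v, v \in overt G -> v \in flatten (drop m parts).
    move=> v vG; have [lv iv] := part_in hP (Sa _ vG).
    exact: mem_flatten_drop (minv_le (Ie _ vG)) iv.
  have SGH : sub G Hm.
    split=> [v vG|u v e]; first by rewrite mem_filter inHm // Sa.
    by case/andP: (edge_in e) => uG vG; rewrite edge_induced !inHm // Sb.
  have [L [LL Leq]] := extend_layering SGH geoL.
  rewrite TlS; right; right; exists L; split=> // aa kk kr.
  apply: (del_phase hP (Inv_sub I (sub_induced_l _ _))).
    apply: leq_trans (count_uniq_le (p2 := fun x => (aa <= lam x)%R && (lam x < aa + kk%:Z)%R)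
       (s2 := overt (induced G0 (fun x => x \in nth [::] parts m))) (undup_uniq _) _) _.
      move=> x; rewrite mem_undup mem_filter => /andP[h xG] /eqP px.
      have [_ ix] := part_in hP (Sa _ xG); rewrite px -/m in ix.
      by rewrite mem_filter ix Sa //= -Leq.
    apply: leq_trans (count_window _ _ wid) _.
    by rewrite mulnC leq_mul2l -(addn0 (sq d r j)) kr orbT.
  move=> G2 I2; rewrite seq2; apply: IH I2 _.
  by rewrite -seq1.
-
  rewrite TlS; right; right; exists (fun v => mu (part parts v)); split.
    move=> u v e; case: (eqVneq (part parts u) (part parts v)) => [->|ne].
      by rewrite subrr.
    exact: Lmu (Inv_edge hP I e ne).
  move=> a k kr; apply: wins_skips; rewrite seq2.
  apply: (IH (induced H (fun x => (a <= mu x)%R && (mu x < a + k%:Z)%R))); last first.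
    rewrite -seq1; apply: (Wmu a k); rewrite addn0; by rewrite addn0 in kr.
  case: I => Ia Ib Sc Ie; split=> //.
  - by move=> x; rewrite mem_filter => /andP[_ /Ib].
  - exact: sub_trans (sub_induced_l _ _) Sc.
  by move=> v; rewrite !mem_filter => /andP[-> /Ie].
Qed.

Theorem mainTheorem5 (C : ograph -> Prop) (d : nat) :
  (1 <= d)%N -> baker_class C -> baker_class (class_d C d).
Proof.
move=> d1 HC r rpos.
have [tH HtH] := HC (fun j => r (sq d r j)) (fun j => rpos _).
exists (Tl d r 0 tH) => G [parts [hP hG hq]].
have I : Inv G parts (quotient G parts) G.
  split=> //; first by split.
  by move=> v vG; rewrite /= mem_iota /=; case: (part_in hP vG).
have := sim hP hG I (j := 0) (HtH _ hq).
by congr destroyer_wins; apply: functional_extensionality => i.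
Qed.
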